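(* Let $(b_j)$ be a wide-$(s)$ sequence in a Banach space $X$. Then there exist bounded sequences $(f_j)$ and $(g_j)$ in $X^*$ such that (i) $f_i(b_j)=1$ for all $j\ge i$ and $f_i(b_j)=0$ for all $j<i$; (ii) $g_j(b_i)=1$ for all $j\ge i$ and $g_j(b_i)=0$ for all $j<i$.
   Context: A semi-normalized sequence $(b_j)$ (i.e. $0<\inf_j\|b_j\|\le\sup_j\|b_j\|<\infty$) is wide-$(s)$ if it is a basic sequence such that $\sum_j c_j$ converges whenever $\sum_j c_jb_j$ converges. *)

(* Defs.v *)
From HB Require Import structures.
From mathcomp Require Import all_boot all_order all_algebra.
From mathcomp Require Import all_classical all_reals all_analysis.
Set Implicit Arguments. Unset Strict Implicit. Unset Printing Implicit Defensive.
Import Order.TTheory GRing.Theory Num.Theory.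
Import numFieldNormedType.Exports.
Local Open Scope classical_set_scope.
Local Open Scope ring_scope.

Definition psum {R : realType} {X : normedModType R} (c : nat -> R) (b : nat -> X)
  (n : nat) : X := \sum_(0 <= j < n) c j *: b j.

Definition span_seq {R : realType} {X : normedModType R} (b : nat -> X) : set X :=
  [set x | exists n (c : nat -> R), x = \sum_(0 <= j < n) c j *: b j].

Definition cspan_seq {R : realType} {X : normedModType R} (b : nat -> X) : set X :=
  closure (span_seq b).

Definition seminormalized {R : realType} {X : normedModType R} (b : nat -> X) : Prop :=
  exists a B : R, 0 < a /\ forall j, a <= `|b j| <= B.

(* basic sequence: a Schauder basis of its closed linear span, i.e. every x
   in the closed span has a unique expansion x = sum_j c_j b_j (norm-convergent
   partial sums). *)
Definition basic_seq {R : realType} {X : normedModType R} (b : nat -> X) : Prop :=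
  forall x, cspan_seq b x ->
    exists c : nat -> R,
      psum c b @ \oo --> x /\
      forall d : nat -> R, psum d b @ \oo --> x -> d = c.

Definition wide_s {R : realType} {X : normedModType R} (b : nat -> X) : Prop :=
  seminormalized b /\ basic_seq b /\
  forall c : nat -> R, cvgn (psum c b) -> cvgn (fun n => \sum_(0 <= j < n) c j).

(* a continuous (= bounded) linear functional on X, i.e. an element of X^* *)
Definition is_dual_elt {R : realType} {X : normedModType R} (f : X -> R) : Prop :=
  (forall (a : R) (x y : X), f (a *: x + y) = a * f x + f y) /\
  exists C : R, forall x, `|f x| <= C * `|x|.

Definition bounded_dual_seq {R : realType} {X : normedModType R}
  (f : nat -> X -> R) : Prop :=
  (forall i, is_dual_elt (f i)) /\
  exists M : R, forall i x, `|f i x| <= M * `|x|.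

(* Main.v *)
From HB Require Import structures.
From mathcomp Require Import all_boot all_order all_algebra.
From mathcomp Require Import all_classical all_reals all_analysis.
From mathcomp Require Import ring lra.
Require Import Defs.
Set Implicit Arguments. Unset Strict Implicit. Unset Printing Implicit Defensive.
Import Order.TTheory GRing.Theory Num.Theory.
Import numFieldNormedType.Exports.
Local Open Scope classical_set_scope.
Local Open Scope ring_scope.
Section Sub.
Variables (R : realType) (X : completeNormedModType R) (Y : set X).
Hypothesis Y0 : Y 0.
Hypothesis Ylin : forall (a : R) x y, Y x -> Y y -> Y (a *: x + y).
Hypothesis Ycl : closed Y.

Definition Yp : pred X := fun x => `[< Y x >].

Lemma Yp_closed : subsemimod_closed Yp.
Proof.
split; first split.
- by apply/asboolP.
- move=> x y /asboolP Hx /asboolP Hy; apply/asboolP.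
  by have := Ylin 1 Hx Hy; rewrite scale1r.
- move=> a x /asboolP Hx; apply/asboolP.
  by have := Ylin a Hx Y0; rewrite addr0.
Qed.

HB.instance Definition _ := GRing.isSubmodClosed.Build R X Yp Yp_closed.

Definition Ys := {x : X | Yp x}.
HB.instance Definition _ := [isSub for (@sval X Yp) : Ys -> X].
HB.instance Definition _ := [Choice of Ys by <:].
HB.instance Definition _ := [SubChoice_isSubLmodule of Ys by <:].

Definition ynorm (y : Ys) : R := `|val y|.
Lemma ynormD x y : ynorm (x + y) <= ynorm x + ynorm y.
Proof. rewrite /ynorm /=. exact: ler_normD. Qed.
Lemma ynormZ (l : R) x : ynorm (l *: x) = `|l| * ynorm x.
Proof. by rewrite /ynorm /= normrZ. Qed.
Lemma ynorm0 x : ynorm x = 0 -> x = 0.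
Proof. by move/eqP; rewrite normr_eq0 => /eqP h; apply: val_inj. Qed.

HB.instance Definition _ := Lmodule_isNormed.Build R Ys ynormD ynormZ ynorm0.

Lemma Ys_complete (F : set_system Ys) : ProperFilter F -> cauchy F -> cvg F.
Proof.
move=> PF cF.
have cG : cauchy (val @ F).
  apply: cauchy_exP => e e0.
  have [y Fy] := (cauchyP F).1 cF e e0.
  exists (val y); rewrite /= /fmap /=.
  apply: filterS Fy => z.
  by rewrite -!ball_normE /ball_ /=.
have [l Gl] := (cvg_ex _).1 (cauchy_cvg _ cG).
have Yl : Y l.
  refine (closed_cvg (F:=F) Y Ycl _ l Gl).
  by apply: nearW => z; have /asboolP := valP z.
have Ypl : Yp l by apply/asboolP.
apply/cvg_ex; exists (exist _ l Ypl).
suff : (id @ F --> (exist _ l Ypl : Ys)) by [].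
apply/cvgrPdist_lt => e e0.
have := (cvgrPdist_lt _ _).1 Gl e e0.
move=> H; apply: filterS (H _) => z; exact. Qed.

HB.instance Definition _ := Uniform_isComplete.Build Ys Ys_complete.
Lemma baire_sub (A : nat -> set X) : (forall k, A k `<=` Y) ->
  (forall y, Y y -> exists k, A k y) ->
  exists k x0 r, 0 < r /\ Y x0 /\ forall y, Y y -> `|y - x0| < r ->
    forall eps, 0 < eps -> exists a, A k a /\ `|y - a| < eps.
Proof.
move=> AY Acov.
pose B k := [set z : Ys | A k (val z)].
pose O k := ~` closure (B k).
have Oopen k : open (O k) by apply: closed_openC; exact: closed_closure.
have : exists k, ~ dense (O k).
  apply/not_existsP => allD.
  have hD : forall k, open (O k) /\ dense (O k).
    by move=> k; split => //; have [//|/(allD k)] := pselect (dense (O k)).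
  have := Baire hD.
  have -> : \bigcap_i O i = set0.
    apply/seteqP; split => // z Hz.
    have /asboolP Yz := valP z.
    have [k Ak] := Acov _ Yz.
    by apply: (Hz k Logic.I); apply: subset_closure.
  move=> /(_ setT) [].
  - by exists 0.
  - exact: openT.
  - by move=> x [].
move=> [k /denseNE [U [[x [Uo Ux]] UO]]].
have [r r0 rU] := (nbhs_ballP _ _).1 (open_nbhs_nbhs (conj Uo Ux)).
have Ucl : U `<=` closure (B k).
  move=> z Uz; have [//|nz] := pselect (closure (B k) z).
  by have : (U `&` O k) z by []; rewrite UO.
exists k, (val x), r; split => //; split; first by have /asboolP := valP x.
move=> y Yy yr eps eps0.
have Yyp : Yp y by apply/asboolP.
have yU : U (exist _ y Yyp).
  apply: rU; rewrite -ball_normE /ball_ /=.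
  by rewrite -[X in X < _]/(`|val x - y|) distrC.
have := Ucl _ yU (ball (exist _ y Yyp : Ys) eps) (nbhsx_ballx _ _ eps0).
move=> [z [Bz zb]]; exists (val z); split => //.
Qed.
End Sub.
Section HahnBanach.
Variables (R : realType) (X : normedModType R) (Y : set X) (phi : X -> R) (C : R).
Hypothesis C0 : 0 <= C.
Hypothesis Y0 : Y 0.
Hypothesis Ylin : forall (a : R) x y, Y x -> Y y -> Y (a *: x + y).
Hypothesis philin : forall (a : R) x y, Y x -> Y y -> phi (a *: x + y) = a * phi x + phi y.
Hypothesis phib : forall y, Y y -> `|phi y| <= C * `|y|.

Definition good (G : set (X * R)) :=
  [/\ (forall x s t, G (x, s) -> G (x, t) -> s = t),
      (forall (a : R) x s y t, G (x, s) -> G (y, t) -> G (a *: x + y, a * s + t)),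
      (forall y, Y y -> G (y, phi y)) &
      (forall x s, G (x, s) -> s <= C * `|x|)].

Definition PG (G : set (X * R)) := G = set0 \/ good G.

Lemma PG_good G p : PG G -> G p -> good G.
Proof. by case=> // -> . Qed.

Lemma PG_chain : forall F : set (set (X * R)), F `<=` PG -> total_on F subset ->
  PG (\bigcup_(G in F) G).
Proof.
move=> F FP Ftot.
have [allE|] := pselect (forall G, F G -> G = set0).
  left; apply/seteqP; split => // p [G FG Gp].
  by move: Gp; rewrite (allE _ FG).
move=> /existsNP [G0 /not_implyP [FG0 G0n]].
have [p0 G0p0] : G0 !=set0 by apply/set0P/eqP.
have gG0 := PG_good (FP _ FG0) G0p0.
have two : forall p q, (\bigcup_(G in F) G) p -> (\bigcup_(G in F) G) q ->
    exists G, [/\ F G, good G, G p & G q].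
  move=> p q [G1 FG1 G1p] [G2 FG2 G2q].
  have [s12|s21] := Ftot _ _ FG1 FG2.
  - by exists G2; split => //; [exact: (PG_good (FP _ FG2) G2q)| exact: s12].
  - by exists G1; split => //; [exact: (PG_good (FP _ FG1) G1p)| exact: s21].
right; split.
- move=> x s t Hs Ht; have [G [FG [g1 _ _ _] Gs Gt]] := two _ _ Hs Ht.
  exact: g1 Gs Gt.
- move=> a x s y t Hs Ht; have [G [FG [_ g2 _ _] Gs Gt]] := two _ _ Hs Ht.
  by exists G => //; exact: g2.
- move=> y Yy; exists G0 => //; by case: gG0 => _ _ g3 _; exact: g3.
- move=> x s [G FG Gs]; by case: (PG_good (FP _ FG) Gs) => _ _ _ g4; exact: g4.
Qed.

Lemma good00 G : good G -> G (0, 0).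
Proof.
case=> _ g2 g3 _.
have h := g2 (-1) _ _ _ _ (g3 _ Y0) (g3 _ Y0).
by move: h; rewrite scaleN1r addNr mulN1r addNr.
Qed.

Lemma extend G x0 : good G -> (forall s, ~ G (x0, s)) ->
  exists G', good G' /\ G `<` G'.
Proof.
move=> gG nx0; have [g1 g2 g3 g4] := gG.
pose L := [set l | exists d s, G (d, s) /\ l = s - C * `|d - x0|].
have L0 : L !=set0 by exists (0 - C * `|0 - x0|); exists 0, 0; split => //; exact: good00.
have Lub : forall d' s', G (d', s') -> ubound L (C * `|d' + x0| - s').
  move=> d' s' Gd' _ [d [s [Gd ->]]].
  have := g4 _ _ (g2 1 _ _ _ _ Gd Gd'); rewrite scale1r mul1r => h.
  rewrite lerBrDr addrAC lerBlDr.
  apply: (le_trans h); rewrite -mulrDr ler_wpM2l //.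
  rewrite (_ : d + d' = (d' + x0) + (d - x0)); first exact: ler_normD.
  by rewrite addrACA addrN addr0 addrC.
have hL : has_ubound L by exists (C * `|0 + x0| - 0); exact: Lub (good00 gG).
pose al := sup L.
have al_lo : forall d s, G (d, s) -> s - C * `|d - x0| <= al.
  by move=> d s Gd; apply: ub_le_sup => //; exists d, s.
have al_hi : forall d s, G (d, s) -> al <= C * `|d + x0| - s.
  by move=> d s Gd; apply: ge_sup => //; exact: Lub.
pose G' := [set p | exists d s t, G (d, s) /\ p = (d + t *: x0, s + t * al)].
have GG' : G `<=` G'.
  by move=> [d s] Gd; exists d, s, 0; split => //; rewrite scale0r mul0r !addr0.
exists G'; split; last first.
  split => //; apply/existsNP; exists (x0, al); apply/not_implyP; split.
    by exists 0, 0, 1; split; [exact: good00|rewrite scale1r mul1r !add0r].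
  exact: nx0.
split.
- move=> x s s' [d [u [t [Gd [-> ->]]]]] [d' [u' [t' [Gd' [ed ->]]]]].
  have tt : t = t'.
    apply/eqP; apply/negPn/negP => tt.
    have ht : t - t' != 0 by rewrite subr_eq0.
    apply: (nx0 ((t - t')^-1 * (u' - u))).
    have := g2 ((t - t')^-1) _ _ _ _ (g2 (-1) _ _ _ _ Gd Gd') (good00 gG).
    rewrite !scaleN1r !mulN1r !addr0 => h.
    suff -> : x0 = (t - t')^-1 *: (- d + d').
      by move: h; rewrite (addrC (- u)).
    apply: (scalerI ht); rewrite scalerA mulfV // scale1r scalerBl.
    by apply: (@addrI _ d); rewrite addrA ed addrK addNKr.
  subst t'.
  have dd : d = d' by move: ed; move/addIr.
  subst d'; by rewrite (g1 _ _ _ Gd Gd').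
- move=> a x s y v [d [u [t1 [Gd [-> ->]]]]] [d' [u' [t2 [Gd' [-> ->]]]]].
  exists (a *: d + d'), (a * u + u'), (a * t1 + t2); split; first exact: g2.
  congr (_, _); last by ring.
  by rewrite scalerDr scalerA scalerDl addrACA.
- by move=> y Yy; apply: GG'; exact: g3.
- move=> x s [d [u [t [Gd [-> ->]]]]].
  have [t0|t0|->] := ltgtP t 0; last by rewrite mul0r scale0r !addr0; exact: g4.
  + have tn : t != 0 by rewrite lt_eqF.
    have e : d + t *: x0 = t *: (t^-1 *: d + x0) by rewrite scalerDr scalerA mulfV // scale1r.
    have := g2 (- t^-1) _ _ _ _ Gd (good00 gG); rewrite !addr0 => G2.
    have h := al_lo _ _ G2.
    have hn : `|- t^-1 *: d - x0| = `|t^-1 *: d + x0| by rewrite scaleNr -opprD normrN.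
    rewrite hn in h.
    rewrite e normrZ ltr0_norm //.
    set N := `|t^-1 *: d + x0| in h *.
    have h2 : (- t) * (- t^-1 * u - C * N) <= (- t) * al.
      by rewrite ler_wpM2l // oppr_ge0 ltW.
    move: h2; rewrite mulrBr mulrA mulrNN mulfV // mul1r => h2.
    nra.
  + have tn : t != 0 by rewrite gt_eqF.
    have e : d + t *: x0 = t *: (t^-1 *: d + x0) by rewrite scalerDr scalerA mulfV // scale1r.
    have := g2 (t^-1) _ _ _ _ Gd (good00 gG); rewrite !addr0 => G2.
    have h := al_hi _ _ G2.
    rewrite e normrZ gtr0_norm //.
    set N := `|t^-1 *: d + x0| in h *.
    have h2 : t * al <= t * (C * N - t^-1 * u).
      by rewrite ler_wpM2l // ltW.
    move: h2; rewrite mulrBr [t * (t^-1 * u)]mulrA mulfV // mul1r => h2.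
    nra.
Qed.
Lemma hahn_banach : exists f : X -> R,
  [/\ (forall (a : R) x y, f (a *: x + y) = a * f x + f y),
      (forall x, `|f x| <= C * `|x|) &
      (forall y, Y y -> f y = phi y)].
Proof.
have [A [PA Amax]] := Zorn_bigcup PG_chain.
pose B := [set p : X * R | Y p.1 /\ p.2 = phi p.1].
have gB : good B.
  split.
  - by move=> x s t [_ /= ->] [_ /= ->].
  - move=> a x s y t [/= Yx ->] [/= Yy ->]; split => /=; first exact: Ylin.
    by rewrite philin.
  - by move=> y Yy; split.
  - move=> x s [/= Yx ->]; exact: le_trans (ler_norm _) (phib Yx).
have gA : good A.
  case: PA => // A0; exfalso; apply: (Amax B); last by right.
  rewrite A0; split => //; apply/existsNP; exists (0, phi 0).
  by apply/not_implyP; split => //; split.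
have totA : forall x, exists s, A (x, s).
  move=> x; apply/not_existsP => nx.
  have [G' [gG' AG']] := extend gA nx.
  by apply: (Amax G') => //; right.
have [f fA] := choice totA.
have [g1 g2 g3 g4] := gA.
have flin : forall (a : R) x y, f (a *: x + y) = a * f x + f y.
  move=> a x y; apply: (g1 (a *: x + y)); first exact: fA.
  exact: g2.
exists f; split => //.
- move=> x; rewrite ler_norml; apply/andP; split; last exact: g4.
  have := g4 _ _ (fA (- x)); rewrite normrN.
  have f0 : f 0 = 0 by apply: (g1 0) => //; exact: good00.
  have := flin (-1) x 0; rewrite addr0 f0 addr0 scaleN1r mulN1r => ->.
  by rewrite lerNl.
- by move=> y Yy; apply: (g1 y) => //; exact: g3.
Qed.
End HahnBanach.
Section Core.
Variables (R : realType) (X : completeNormedModType R) (b : nat -> X).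
Variables (a0 B0 : R).
Hypothesis a0pos : 0 < a0.
Hypothesis bnd : forall j, a0 <= `|b j| <= B0.
Hypothesis wide : forall c : nat -> R, cvgn (psum c b) ->
  cvgn (fun n => \sum_(0 <= j < n) c j).
Hypothesis basic : basic_seq b.
Variable coef : X -> nat -> R.
Hypothesis coefU : forall x d, psum d b @ \oo --> x -> d = coef x.

Definition Y := [set x : X | exists c, psum c b @ \oo --> x].

Lemma coefP x : Y x -> psum (coef x) b @ \oo --> x.
Proof. by move=> [c Hc]; rewrite -(coefU Hc). Qed.

Lemma psum_lin (a : R) c d n :
  psum (fun j => a * c j + d j) b n = a *: psum c b n + psum d b n.
Proof.
rewrite /psum scaler_sumr -big_split; apply: eq_bigr => j _.
by rewrite scalerDl scalerA.
Qed.

Lemma psum_lin_cvg (a : R) c d x y : psum c b @ \oo --> x -> psum d b @ \oo --> y ->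
  psum (fun j => a * c j + d j) b @ \oo --> a *: x + y.
Proof.
move=> hc hd.
have -> : psum (fun j => a * c j + d j) b = (fun n => a *: psum c b n + psum d b n).
  by apply/funext => n; exact: psum_lin.
by apply: cvgD => //; exact: cvgZr.
Qed.

Lemma Ylin (a : R) x y : Y x -> Y y -> Y (a *: x + y).
Proof. by move=> [c hc] [d hd]; exists (fun j => a * c j + d j); exact: psum_lin_cvg. Qed.

Lemma psum0 n : psum (fun=> 0) b n = 0.
Proof. by rewrite /psum big1 // => j _; rewrite scale0r. Qed.

Lemma Y0 : Y 0.
Proof.
exists (fun=> 0); have -> : psum (fun=> 0) b = fun=> 0 by apply/funext => n; exact: psum0.
exact: cvg_cst.
Qed.

Lemma coef_lin (a : R) x y : Y x -> Y y ->
  coef (a *: x + y) = (fun j => a * coef x j + coef y j).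
Proof.
move=> Yx Yy; symmetry; apply: coefU; apply: psum_lin_cvg; exact: coefP.
Qed.

Lemma Ycl : closed Y.
Proof.
have -> : Y = cspan_seq b.
  apply/seteqP; split => x.
  - move=> [c hc]; refine (closed_cvg (F:=\oo) (u_:=psum c b) (closure (span_seq b)) (@closed_closure _ _) _ x hc).
    by apply: nearW => n; apply: subset_closure; exists n, c.
  - by move=> /basic [c [hc _]]; exists c.
exact: closed_closure.
Qed.

Definition P k x := psum (coef x) b k.
Definition S k x := \sum_(0 <= j < k) coef x j.

Lemma P_lin k (a : R) x y : Y x -> Y y -> P k (a *: x + y) = a *: P k x + P k y.
Proof. by move=> Yx Yy; rewrite /P coef_lin // psum_lin. Qed.

Lemma S_lin k (a : R) x y : Y x -> Y y -> S k (a *: x + y) = a * S k x + S k y.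
Proof.
move=> Yx Yy; rewrite /S coef_lin // mulr_sumr -big_split.
by apply: eq_bigr.
Qed.

Lemma psumS c n : psum c b n.+1 = psum c b n + c n *: b n.
Proof. by rewrite /psum big_nat_recr. Qed.

Lemma coef_bound x j : `|coef x j| <= (`|P j.+1 x| + `|P j x|) / a0.
Proof.
have e : coef x j *: b j = P j.+1 x - P j x by rewrite /P psumS addrAC subrr add0r.
rewrite ler_pdivlMr //; apply: (@le_trans _ _ (`|coef x j| * `|b j|)).
  by rewrite ler_wpM2l //; case/andP: (bnd j).
by rewrite -normrZ e; exact: ler_normB.
Qed.

Definition Mb x K := forall k, `|P k x| <= K /\ `|S k x| <= K.

Lemma Mb_lin (a : R) x y K1 K2 : Y x -> Y y -> Mb x K1 -> Mb y K2 ->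
  Mb (a *: x + y) (`|a| * K1 + K2).
Proof.
move=> Yx Yy hx hy k; have [hx1 hx2] := hx k; have [hy1 hy2] := hy k.
rewrite P_lin // S_lin //; split.
- apply: (le_trans (ler_normD _ _)); rewrite normrZ lerD //.
  by rewrite ler_wpM2l.
- apply: (le_trans (ler_normD _ _)); rewrite normrM lerD //.
  by rewrite ler_wpM2l.
Qed.

Lemma Mb_le x K K' : K <= K' -> Mb x K -> Mb x K'.
Proof. by move=> KK h k; have [h1 h2] := h k; split; apply: le_trans KK. Qed.

Lemma seq_bound (u : nat -> R) : cvgn u -> exists M, forall n, `|u n| <= M.
Proof.
move=> /cvg_seq_bounded h.
have [M hM] := (ex_bound (PF:=globally_properfilter (a:=0%N) I) _).1 h.
exists M => n; exact: hM.
Qed.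

Lemma seq_boundV (u : nat -> X) : cvgn u -> exists M, forall n, `|u n| <= M.
Proof.
move=> /cvg_seq_bounded h.
have [M hM] := (ex_bound (PF:=globally_properfilter (a:=0%N) I) _).1 h.
exists M => n; exact: hM.
Qed.

Lemma Mb_cover x : Y x -> exists k : nat, Mb x k%:R.
Proof.
move=> Yx.
have cP : cvgn (fun k => P k x) by apply/cvg_ex; exists x; exact: coefP.
have [M1 h1] := seq_boundV cP.
have [M2 h2] := seq_bound (wide cP).
exists (Num.Def.trunc (Num.max M1 M2)).+1 => k; split.
- apply: (le_trans (h1 k)); apply: (le_trans _ (ltW (truncnS_gt _))).
  by rewrite le_max lexx.
- apply: (le_trans (h2 k)); apply: (le_trans _ (ltW (truncnS_gt _))).
  by rewrite le_max lexx orbT.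
Qed.

Lemma lim_dist_le (V : normedModType R) (u : nat -> V) (l a : V) (e : R) :
  u @ \oo --> l -> (\forall n \near \oo, `|a - u n| <= e) -> `|a - l| <= e.
Proof.
move=> ul hn; apply/ler_addgt0Pr => eps eps0.
have hl := (cvgrPdist_lt u l).1 ul eps eps0.
have [n [h1 h2]] := filter_ex (filterI hn (hl _)).
rewrite -(subrK (u n) a) -addrA.
apply: (le_trans (ler_normD _ _)); apply: lerD => //.
by rewrite distrC ltW.
Qed.

Lemma cauchy_seq_cvg (V : completeNormedModType R) (u : nat -> V) :
  (forall e, 0 < e -> exists N, forall m n, (N <= m)%N -> (N <= n)%N -> `|u m - u n| <= e) ->
  cvgn u.
Proof.
move=> hc; apply: cauchy_cvg; apply: cauchy_exP => e e0.
have e2 : 0 < e / 2 by rewrite divr_gt0.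
have [N hN] := hc (e / 2) e2.
exists (u N); rewrite /= /fmap /=.
exists N => // n /= Nn; rewrite -ball_normE /ball_ /=.
apply: (le_lt_trans (hN N n (leqnn N) Nn)).
by rewrite ltr_pdivrMr // ltr_pMr // ltr1n.
Qed.

Lemma sum_cvg (u : nat -> nat -> R) (v : nat -> R) :
  (forall j, (fun m => u m j) @ \oo --> v j) ->
  forall k, (fun m => psum (u m) b k) @ \oo --> psum v b k.
Proof.
move=> huv; elim=> [|k IH].
  rewrite /psum; under eq_fun do rewrite big_geq //; rewrite big_geq //.
  exact: cvg_cst.
rewrite /psum; under eq_fun do rewrite big_nat_recr //; rewrite big_nat_recr //.
by apply: cvgD => //; apply: cvgZl.
Qed.

Lemma rsum_cvg (u : nat -> nat -> R) (v : nat -> R) :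
  (forall j, (fun m => u m j) @ \oo --> v j) ->
  forall k, (fun m => \sum_(0 <= j < k) u m j) @ \oo --> \sum_(0 <= j < k) v j.
Proof.
move=> huv; elim=> [|k IH].
  under eq_fun do rewrite big_geq //; rewrite big_geq //.
  exact: cvg_cst.
under eq_fun do rewrite big_nat_recr //; rewrite big_nat_recr //.
by apply: cvgD.
Qed.

Lemma coef_diff_bound x z j : Y x -> Y z ->
  `|coef x j - coef z j| <=
    (`|P j.+1 x - P j.+1 z| + `|P j x - P j z|) / a0.
Proof.
move=> Yx Yz.
have e : coef x j - coef z j = coef ((-1) *: z + x) j.
  by rewrite coef_lin // mulN1r addrC.
have eP k : P k x - P k z = P k ((-1) *: z + x).
  by rewrite P_lin // scaleN1r addrC.
by rewrite e !eP; exact: coef_bound.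
Qed.

Lemma CL (s : nat -> X) y : (forall m, Y (s m)) -> Y y -> s @ \oo --> y ->
  (forall e, 0 < e -> exists N, forall m n, (N <= m)%N -> (N <= n)%N ->
     forall k, `|P k (s m) - P k (s n)| <= e) ->
  forall j, (fun m => coef (s m) j) @ \oo --> coef y j.
Proof.
move=> Ys Yy sy hc.
have cj : forall j, cvgn (fun m => coef (s m) j).
  move=> j; apply: cauchy_seq_cvg => e e0.
  have e2 : 0 < e * a0 / 2 by rewrite divr_gt0 // mulr_gt0.
  have [N hN] := hc (e * a0 / 2) e2.
  exists N => m n Nm Nn.
  apply: (le_trans (coef_diff_bound _ (Ys m) (Ys n))).
  rewrite ler_pdivrMr //.
  apply: (le_trans (lerD (hN m n Nm Nn j.+1) (hN m n Nm Nn j))).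
  by rewrite -splitr.
pose d j := lim ((fun m => coef (s m) j) @ \oo).
have hd : forall j, (fun m => coef (s m) j) @ \oo --> d j by move=> j; exact: cj.
have hP := sum_cvg hd.
suff : psum d b @ \oo --> y by move=> /coefU <-.
apply/cvgrPdist_le => e e0.
have e30 : 0 < e / 3 by rewrite divr_gt0.
have [N hN] := hc _ e30.
have hy := (cvgrPdist_le s y).1 sy _ e30.
have [m [Nm ym]] := filter_ex (filterI (nbhs_infty_ge N) (hy _)).
have hk : forall k, `|P k (s m) - psum d b k| <= e / 3.
  move=> k; apply: (lim_dist_le (hP k)).
  by apply: filterS (nbhs_infty_ge N) => n Nn; exact: hN.
have hsm := (cvgrPdist_le (psum (coef (s m)) b) (s m)).1 (coefP (Ys m)) _ e30.
apply: filterS (hsm _) => k hk2.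
have -> : y - psum d b k = (y - s m) + ((s m - P k (s m)) + (P k (s m) - psum d b k)).
  by rewrite !addrA !subrK.
have -> : e = e / 3 + (e / 3 + e / 3) by field.
apply: (le_trans (ler_normD _ _)); apply: lerD => //.
apply: (le_trans (ler_normD _ _)); apply: lerD => //.
Qed.

Lemma coef0 : coef 0 = fun=> 0.
Proof.
symmetry; apply: coefU.
have -> : psum (fun=> 0) b = fun=> 0 by apply/funext => n; exact: psum0.
exact: cvg_cst.
Qed.

Lemma Mb0 : Mb 0 0.
Proof.
move=> k; rewrite /P /S coef0 psum0 normr0 big1 ?normr0 //.
Qed.

Lemma Ysub x z : Y x -> Y z -> Y (x - z).
Proof. by move=> Yx Yz; have := Ylin (-1) Yz Yx; rewrite scaleN1r addrC. Qed.

Lemma Yadd x z : Y x -> Y z -> Y (x + z).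
Proof. by move=> Yx Yz; have := Ylin 1 Yx Yz; rewrite scale1r. Qed.

Lemma Mb_add x z K1 K2 : Y x -> Y z -> Mb x K1 -> Mb z K2 -> Mb (x + z) (K1 + K2).
Proof. by move=> Yx Yz h1 h2; have := Mb_lin 1 Yx Yz h1 h2; rewrite scale1r normr1 mul1r. Qed.

Lemma Mb_sub x z K1 K2 : Y x -> Y z -> Mb x K1 -> Mb z K2 -> Mb (x - z) (K1 + K2).
Proof.
move=> Yx Yz h1 h2; have := Mb_lin (-1) Yz Yx h2 h1.
by rewrite scaleN1r normrN normr1 mul1r addrC (addrC K2).
Qed.

Lemma P_sub k x z : Y x -> Y z -> P k (x - z) = P k x - P k z.
Proof. by move=> Yx Yz; have := P_lin k (-1) Yz Yx; rewrite !scaleN1r addrC (addrC (- _)). Qed.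

Lemma S_sub k x z : Y x -> Y z -> S k (x - z) = S k x - S k z.
Proof. by move=> Yx Yz; have := S_lin k (-1) Yz Yx; rewrite scaleN1r mulN1r addrC (addrC (- _)). Qed.

Lemma Mb_scale (t : R) x K : Y x -> Mb x K -> Mb (t *: x) (`|t| * K).
Proof.
move=> Yx h; have := Mb_lin t Yx Y0 h Mb0; rewrite !addr0; exact.
Qed.

Lemma approx : exists L, 0 <= L /\ forall y, Y y -> forall e, 0 < e ->
  exists a, [/\ Y a, Mb a (L * `|y|) & `|y - a| < e].
Proof.
pose A k := [set x | Y x /\ Mb x k%:R].
have AY k : A k `<=` Y by move=> x [].
have Acov y : Y y -> exists k, A k y by move=> Yy; have [k hk] := Mb_cover Yy; exists k.
have [k0 [x0 [r [r0 [Yx0 H]]]]] := baire_sub Y0 Ylin Ycl AY Acov.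
have claim1 : forall z, Y z -> `|z| < r -> forall e, 0 < e ->
    exists a, [/\ Y a, Mb a (k0%:R + k0%:R) & `|z - a| < e].
  move=> z Yz zr e e0.
  have e2 : 0 < e / 2 by rewrite divr_gt0.
  have Yxz : Y (x0 + z) by exact: Yadd.
  have d1 : `|x0 + z - x0| < r by rewrite (addrC x0) addrK.
  have d2 : `|x0 - x0| < r by rewrite subrr normr0.
  have [a1 [[Ya1 Ma1] h1]] := H (x0 + z) Yxz d1 (e / 2) e2.
  have [a2 [[Ya2 Ma2] h2]] := H x0 Yx0 d2 (e / 2) e2.
  exists (a1 - a2); split; first exact: Ysub.
    exact: Mb_sub.
  have -> : z - (a1 - a2) = (x0 + z - a1) - (x0 - a2).
    by rewrite !opprB [RHS]addrC !addrA subrK (addrC z).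
  apply: (le_lt_trans (ler_normB _ _)).
  by rewrite (splitr e) ltrD.
exists (4 * k0%:R / r); split; first by rewrite divr_ge0 // ltW.
move=> y Yy e e0.
have [->|yn] := eqVneq y 0.
  by exists 0; split => //; [exact: Y0|rewrite normr0 mulr0; exact: Mb0|rewrite subrr normr0].
have ny0 : 0 < `|y| by rewrite normr_gt0.
pose t := r / (2 * `|y|).
have t0 : 0 < t by rewrite divr_gt0 // mulr_gt0.
have Yz : Y (t *: y) by have := Ylin t Yy Y0; rewrite addr0.
have zr : `|t *: y| < r.
  rewrite normrZ gtr0_norm // /t -mulrA invfM -mulrA mulVf ?mulr1; last by rewrite gt_eqF.
  by rewrite ltr_pdivrMr // ltr_pMr // ltr1n.
have et : 0 < e * t by rewrite mulr_gt0.
have [a' [Ya' Ma' ha']] := claim1 _ Yz zr _ et.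
exists (t^-1 *: a'); split.
- by have := Ylin t^-1 Ya' Y0; rewrite addr0.
- apply: (Mb_le _ (Mb_scale t^-1 Ya' Ma')).
  rewrite gtr0_norm ?invr_gt0 // /t invfM invrK.
  rewrite le_eqVlt; apply/orP; left; apply/eqP.
  field; rewrite gt_eqF //.
- have -> : y - t^-1 *: a' = t^-1 *: (t *: y - a').
    by rewrite scalerBr scalerA mulVf ?scale1r // gt_eqF.
  rewrite normrZ gtr0_norm ?invr_gt0 // -(ltr_pM2l t0) mulrA mulfV ?mul1r ?gt_eqF //.
  by rewrite mulrC.
Qed.

Lemma key : exists L, 0 <= L /\ forall y, Y y -> Mb y (L * `|y|).
Proof.
have [L [L0 HL]] := approx.
exists L; split => // y Yy.
have hF : forall p : X * R, exists a, Y p.1 -> 0 < p.2 ->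
    [/\ Y a, Mb a (L * `|p.1|) & `|p.1 - a| < p.2].
  move=> [x e] /=; have [[Yx e0]|nh] := pselect (Y x /\ 0 < e).
    by have [a ha] := HL x Yx e e0; exists a.
  by exists 0 => Yx e0; exfalso; apply: nh.
have [F HF] := choice hF.
pose q (n : nat) : R := (2^-1) ^+ n.
have q0 n : 0 <= q n by rewrite /q exprn_ge0 // invr_ge0.
have qS n : q n.+1 = q n / 2 by rewrite /q exprSr.
suff eta : forall eta, 0 < eta -> forall k,
    `|P k y| <= L * `|y| + L * eta /\ `|S k y| <= L * `|y| + L * eta.
  move=> k; split; apply/ler_addgt0Pr => e e0.
  - have e1 : 0 < e / (L + 1) by rewrite divr_gt0 // ltr_wpDl.
    apply: (le_trans (eta _ e1 k).1); rewrite lerD2l.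
    rewrite mulrA ler_pdivrMr ?ltr_wpDl //; nra.
  - have e1 : 0 < e / (L + 1) by rewrite divr_gt0 // ltr_wpDl.
    apply: (le_trans (eta _ e1 k).2); rewrite lerD2l.
    rewrite mulrA ler_pdivrMr ?ltr_wpDl //; nra.
move=> eta eta0.
pose ep n := eta * q n.+1.
have ep0 n : 0 < ep n by rewrite mulr_gt0 // /q exprn_gt0 // invr_gt0.
pose fix ys n := if n is n'.+1 then ys n' - F (ys n', ep n') else y.
pose aa n := F (ys n, ep n).
have ysS n : ys n.+1 = ys n - aa n by [].
have Hys : forall n, Y (ys n) /\ [/\ Y (aa n), Mb (aa n) (L * `|ys n|) & `|ys n.+1| < ep n].
  elim=> [|n [IH1 IH2]].
    by split => //; have [] := HF (y, ep 0) Yy (ep0 0).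
  have Yn1 : Y (ys n.+1) by rewrite ysS; case: IH2 => Ya _ _; exact: Ysub.
  by split => //; have [] := HF (ys n.+1, ep n.+1) Yn1 (ep0 n.+1).
have Yys n : Y (ys n) by case: (Hys n).
have Yaa n : Y (aa n) by case: (Hys n) => _ [].
have M1 : forall n m, Mb (ys n.+1 - ys (n.+1 + m)%N) (L * eta * (q n - q (n + m)%N)).
  move=> n; elim=> [|m IH].
    by rewrite !addn0 subrr subrr mulr0; exact: Mb0.
  have e1 : ys n.+1 - ys (n.+1 + m.+1)%N = (ys n.+1 - ys (n.+1 + m)%N) + aa (n.+1 + m)%N.
    by rewrite addnS ysS opprB addrCA addrC.
  have Ma : Mb (aa (n.+1 + m)%N) (L * `|ys (n.+1 + m)%N|) by case: (Hys (n.+1 + m)%N) => _ [].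
  rewrite e1; apply: (Mb_le _ (Mb_add (Ysub (Yys _) (Yys _)) (Yaa _) IH Ma)).
  have [_ [_ _ hlt]] := Hys (n + m)%N.
  have : L * `|ys (n.+1 + m)%N| <= L * eta * q (n + m)%N.+1.
    rewrite -mulrA ler_wpM2l //; apply: ltW.
    by rewrite addSn; exact: hlt.
  rewrite addnS qS => h.
  have -> : q (n + m)%N = 2 * (q (n + m)%N / 2) by field.
  set u := q (n + m)%N / 2 in h *.
  nra.
have M2 : forall m, Mb (y - ys m) (L * `|y| + L * eta).
  case=> [|m].
    rewrite subrr; apply: (Mb_le _ Mb0).
    by rewrite addr_ge0 // mulr_ge0 // ltW.
  have Ma : Mb (aa 0%N) (L * `|ys 0%N|) by case: (Hys 0%N) => _ [].
  have e1 : y - ys m.+1 = aa 0%N + (ys 1%N - ys (1 + m)%N).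
    by rewrite add1n (ysS 0%N) /= addrCA addrA subrK.
  rewrite e1; apply: (Mb_le _ (Mb_add (Yaa _) (Ysub (Yys _) (Yys _)) Ma (M1 0%N m))).
  rewrite /= add0n /q expr0 lerD2l.
  have := q0 m; rewrite /q => hq.
  have : 0 <= L * eta by rewrite mulr_ge0 // ltW.
  nra.
have qcvg : q @ \oo --> 0.
  by apply: cvg_expr; rewrite gtr0_norm ?invr_gt0 // invf_lt1 // ltr1n.
have qsmall : forall d, 0 < d -> \forall n \near \oo, q n <= d.
  move=> d d0; have := (cvgrPdist_le q 0).1 qcvg d d0.
  move=> h; apply: filterS (h _) => n; rewrite sub0r normrN ger0_norm //.
have sy : (fun m => y - ys m) @ \oo --> y.
  apply/cvgrPdist_le => e e0.
  have ee : 0 < e / eta by rewrite divr_gt0.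
  apply: filterS (filterI (nbhs_infty_ge 1) (qsmall _ ee)) => -[|n] [//= _ hq].
  rewrite opprB addrC subrK.
  have [_ [_ _ hlt]] := Hys n.
  apply: (le_trans (ltW hlt)); rewrite /ep -(ler_pM2l eta0) in hq.
  by move: hq; rewrite mulrCA mulfV ?gt_eqF // mulr1.
have cauchyP : forall e, 0 < e -> exists N, forall m n, (N <= m)%N -> (N <= n)%N ->
    forall k, `|P k (y - ys m) - P k (y - ys n)| <= e.
  move=> e e0.
  have Le : 0 <= L * eta by rewrite mulr_ge0 // ltW.
  have dd : 0 < e / (2 * (L * eta) + 1) by rewrite divr_gt0 // ltr_wpDl // mulr_ge0.
  have [N' hN'] := filter_ex (qsmall _ dd).
  have hb : forall m, (N'.+1 <= m)%N -> forall k, `|P k (ys N'.+1) - P k (ys m)| <= L * eta * q N'.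
    move=> m Nm k.
    have := M1 N' (m - N'.+1)%N; rewrite subnKC // => h.
    have [h1 _] := h k; rewrite P_sub // in h1.
    apply: (le_trans h1); rewrite ler_wpM2l //.
    by rewrite lerBlDr lerDl q0.
  exists N'.+1 => m n Nm Nn k.
  rewrite P_sub // P_sub // opprB addrC addrA subrK.
  have -> : P k (ys n) - P k (ys m) = (P k (ys N'.+1) - P k (ys m)) - (P k (ys N'.+1) - P k (ys n)).
    by rewrite opprB [RHS]addrC [RHS]addrA subrK.
  apply: (le_trans (ler_normB _ _)).
  apply: (le_trans (lerD (hb m Nm k) (hb n Nn k))).
  have : L * eta * q N' <= L * eta * (e / (2 * (L * eta) + 1)) by rewrite ler_wpM2l.
  have : (L * eta) * (e / (2 * (L * eta) + 1)) * (2 * (L * eta) + 1) = L * eta * e.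
    by field; rewrite gt_eqF // ltr_wpDl // mulr_ge0.
  set D := e / (2 * (L * eta) + 1).
  have : 0 <= D by rewrite ltW.
  nra.
have Ysm m : Y (y - ys m) by exact: Ysub.
have hc := CL Ysm Yy sy cauchyP.
have hP := sum_cvg hc.
have hS := rsum_cvg hc.
move=> k; split.
- have := lim_dist_le (a := 0) (e := L * `|y| + L * eta) (hP k).
  rewrite sub0r normrN; apply; apply: nearW => m.
  by rewrite sub0r normrN; have [] := M2 m k.
- have := lim_dist_le (a := 0) (e := L * `|y| + L * eta) (hS k).
  rewrite sub0r normrN; apply; apply: nearW => m.
  by rewrite sub0r normrN; have [] := M2 m k.
Qed.

Definition T x := lim ((fun k => S k x) @ \oo).

Lemma S_cvg x : Y x -> (fun k => S k x) @ \oo --> T x.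
Proof.
move=> Yx; have cP : cvgn (psum (coef x) b) by apply/cvg_ex; exists x; exact: coefP.
exact: (wide cP).
Qed.

Lemma T_lin (a : R) x y : Y x -> Y y -> T (a *: x + y) = a * T x + T y.
Proof.
move=> Yx Yy; apply: (cvg_lim (@Rhausdorff R)).
have -> : (fun k => S k (a *: x + y)) = (fun k => a * S k x + S k y).
  by apply/funext => k; rewrite S_lin.
apply: cvgD; [apply: cvgMr; exact: S_cvg|exact: S_cvg].
Qed.

Lemma delta_psum j n : psum (fun i => (i == j)%:R) b n = if (j < n)%N then b j else 0.
Proof.
elim: n => [|n IH]; first by rewrite /psum big_geq.
rewrite psumS IH; case: ltngtP => [jn|nj|<-].
- by rewrite ltnS ltnW // scale0r addr0.
- by rewrite ltnNge nj scale0r addr0.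
- by rewrite ltnS leqnn scale1r add0r.
Qed.

Lemma coef_b j : coef (b j) = fun i => (i == j)%:R.
Proof.
symmetry; apply: coefU; apply: cvg_near_cst.
by apply: filterS (nbhs_infty_gt j) => n jn; rewrite delta_psum jn.
Qed.

Lemma Yb j : Y (b j).
Proof.
exists (fun i => (i == j)%:R); apply: cvg_near_cst.
by apply: filterS (nbhs_infty_gt j) => n jn; rewrite delta_psum jn.
Qed.

Lemma S_b i j : S i (b j) = (j < i)%:R.
Proof.
rewrite /S coef_b; elim: i => [|i IH]; first by rewrite big_geq.
rewrite big_nat_recr //= IH; case: ltngtP => [ji|ij|<-].
- by rewrite ltnS ltnW // addr0.
- by rewrite ltnNge ij addr0.
- by rewrite ltnS leqnn add0r.
Qed.

Lemma T_b j : T (b j) = 1.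
Proof.
apply: (cvg_lim (@Rhausdorff R)); apply: cvg_near_cst.
by apply: filterS (nbhs_infty_gt j) => n jn; rewrite S_b jn.
Qed.

Lemma functionals : exists f g : nat -> X -> R,
    bounded_dual_seq f /\ bounded_dual_seq g /\
    (forall i j : nat, (i <= j)%N -> f i (b j) = 1) /\
    (forall i j : nat, (j < i)%N -> f i (b j) = 0) /\
    (forall i j : nat, (i <= j)%N -> g j (b i) = 1) /\
    (forall i j : nat, (j < i)%N -> g j (b i) = 0).
Proof.
have [L [L0 HL]] := key.
have HS k x : Y x -> `|S k x| <= L * `|x| by move=> Yx; have [] := HL x Yx k.
have HT x : Y x -> `|T x| <= L * `|x|.
  move=> Yx; have := lim_dist_le (a := 0) (e := L * `|x|) (S_cvg Yx).
  rewrite sub0r normrN; apply; apply: nearW => k.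
  by rewrite sub0r normrN; exact: HS.
have C0 : 0 <= 2 * L by rewrite mulr_ge0.
have hf : forall i, exists f : X -> R,
    [/\ (forall (a : R) x y, f (a *: x + y) = a * f x + f y),
        (forall x, `|f x| <= 2 * L * `|x|) &
        (forall y, Y y -> f y = T y - S i y)].
  move=> i; apply: hahn_banach => //.
  - exact: Y0.
  - exact: Ylin.
  - move=> a x y Yx Yy; rewrite T_lin // S_lin //; ring.
  - move=> y Yy; apply: (le_trans (ler_normB _ _)).
    by rewrite mulrDl mul1r mulrDl lerD // ?HT ?HS.
have hg : forall i, exists f : X -> R,
    [/\ (forall (a : R) x y, f (a *: x + y) = a * f x + f y),
        (forall x, `|f x| <= 2 * L * `|x|) &
        (forall y, Y y -> f y = S i.+1 y)].
  move=> i; apply: hahn_banach => //.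
  - exact: Y0.
  - exact: Ylin.
  - by move=> a x y Yx Yy; rewrite S_lin.
  - move=> y Yy; apply: (le_trans (HS _ _ Yy)).
    by rewrite ler_wpM2r // ler_peMl // ler1n.
have [f Hf] := choice hf.
have [g Hg] := choice hg.
exists f, g; split; [|split; [|split; [|split; [|split]]]].
- split; last by exists (2 * L) => i x; have [_ h _] := Hf i; exact: h.
  move=> i; have [h1 h2 _] := Hf i; split => //; exists (2 * L); exact: h2.
- split; last by exists (2 * L) => i x; have [_ h _] := Hg i; exact: h.
  move=> i; have [h1 h2 _] := Hg i; split => //; exists (2 * L); exact: h2.
- move=> i j ij; have [_ _ ->] := Hf i; last exact: Yb.
  by rewrite T_b S_b ltnNge ij subr0.
- move=> i j ji; have [_ _ ->] := Hf i; last exact: Yb.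
  by rewrite T_b S_b ji subrr.
- move=> i j ij; have [_ _ ->] := Hg j; last exact: Yb.
  by rewrite S_b ltnS ij.
- move=> i j ji; have [_ _ ->] := Hg j; last exact: Yb.
  by rewrite S_b ltnS leqNgt ji.
Qed.

End Core.


Theorem proposition9 (R : realType) (X : completeNormedModType R) (b : nat -> X) :
  wide_s b ->
  exists f g : nat -> X -> R,
    bounded_dual_seq f /\ bounded_dual_seq g /\
    (forall i j : nat, (i <= j)%N -> f i (b j) = 1) /\
    (forall i j : nat, (j < i)%N -> f i (b j) = 0) /\
    (forall i j : nat, (i <= j)%N -> g j (b i) = 1) /\
    (forall i j : nat, (j < i)%N -> g j (b i) = 0).
Proof.
move=> [[a0 [B0 [a0pos bnd]]] [basic wide]].
have hc : forall x : X, exists c : nat -> R, forall d, psum d b @ \oo --> x -> d = c.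
  move=> x; have [[d0 hd0]|nd] := pselect (exists d, psum d b @ \oo --> x).
    have xs : cspan_seq b x.
      refine (closed_cvg (F:=\oo) (u_:=psum d0 b) (closure (span_seq b)) (@closed_closure _ _) _ x hd0).
      by apply: nearW => n; apply: subset_closure; exists n, d0.
    have [c [_ hu]] := basic x xs; exists c => d hd; exact: hu.
  by exists (fun=> 0) => d hd; exfalso; apply: nd; exists d.
have [coef hcoef] := choice hc.
exact: (functionals a0pos bnd wide basic (coef:=coef) hcoef).
Qed.
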